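(* Let $d\ge 1$ and $0<\alpha\le 1/2$. There is a constant $C$ (depending only on $d$ and $\alpha$) such that for every positive integer $n$ there exists an $n$-point set $S\subset\mathbb{R}^d$ such that the origin lies at depth $\alpha n$ with respect to $S$, but the origin is contained in at most $$\bigl((d+1)\alpha^d-2d\alpha^{d+1}\bigr)\frac{n^{d+1}}{(d+1)!}+C\,n^{d}$$ of the $d$-simplices spanned by $S$.
   Context: A point $p$ lies at depth $m$ with respect to a finite set $S\subset\mathbb{R}^d$ if every closed halfspace containing $p$ contains at least $m$ points of $S$. A $d$-simplex spanned by $S$ is the convex hull of a $(d+1)$-element subset of $S$; the count is over $(d+1)$-element subsets of $S$ whose convex hull contains the origin. *)

(* Defs.v *)
From HB Require Import structures.
From mathcomp Require Import all_boot all_order all_algebra.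
From mathcomp Require Import boolp reals.
Set Implicit Arguments. Unset Strict Implicit. Unset Printing Implicit Defensive.
Import Order.TTheory GRing.Theory Num.Theory.
Local Open Scope ring_scope.

Definition dotp (R : realType) (d : nat) (u x : 'rV[R]_d) : R :=
  \sum_(k < d) u 0 k * x 0 k.

Definition in_halfspace (R : realType) (d : nat) (u : 'rV[R]_d) (c : R)
  (x : 'rV[R]_d) : bool := c <= dotp u x.

Definition at_depth (R : realType) (d n : nat) (S : 'I_n -> 'rV[R]_d)
  (p : 'rV[R]_d) (m : R) : Prop :=
  forall (u : 'rV[R]_d) (c : R), u != 0 -> in_halfspace u c p ->
    m <= (#|[set i : 'I_n | in_halfspace u c (S i)]|)%:R.

Definition in_conv_hull (R : realType) (d n : nat) (S : 'I_n -> 'rV[R]_d)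
  (T : {set 'I_n}) (p : 'rV[R]_d) : Prop :=
  exists lam : 'I_n -> R,
    [/\ forall i, 0 <= lam i,
        forall i, i \notin T -> lam i = 0,
        \sum_(i < n) lam i = 1
      & \sum_(i < n) lam i *: S i = p].

(* Number of d-simplices spanned by S (convex hulls of (d+1)-element subsets
   of S, S injective) that contain p. *)
Definition simplex_count (R : realType) (d n : nat) (S : 'I_n -> 'rV[R]_d)
  (p : 'rV[R]_d) : nat :=
  #|[set T : {set 'I_n} | (#|T| == d.+1) && `[< in_conv_hull S T p >]]|.

(* Main.v *)
Require Import Defs.
From HB Require Import structures.
From mathcomp Require Import all_boot all_order all_algebra.
From mathcomp Require Import boolp reals.
From mathcomp Require Import zify ring lra.
Set Implicit Arguments. Unset Strict Implicit. Unset Printing Implicit Defensive.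
Import Order.TTheory GRing.Theory Num.Theory.
Local Open Scope ring_scope.

Section Key.
Variables (R : realType) (d : nat) (I : finType) (lam tp wt : I -> R) (T : {set I}).
Hypothesis H0 : forall g : {poly R}, (size g <= d)%N ->
  \sum_(i in T) lam i * (wt i * g.[tp i]) = 0.
Hypothesis lam_ge0 : forall i, 0 <= lam i.
Hypothesis lam_sum : \sum_(i in T) lam i = 1.
Hypothesis cardT : #|T| = d.+1.
Hypothesis d_gt0 : (0 < d)%N.
Hypothesis wt_neq0 : forall i, i \in T -> wt i != 0.

Definition XP (B : {set I}) : {poly R} := \prod_(c in B) ('X - (tp c)%:P).

Lemma size_XP (B : {set I}) : size (XP B) = #|B|.+1.
Proof. by rewrite /XP -big_enum size_prod_XsubC cardE. Qed.

Lemma XP_eval (B : {set I}) x : (XP B).[x] = \prod_(c in B) (x - tp c).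
Proof. rewrite /XP horner_prod; apply: eq_bigr => c _; by rewrite hornerXsubC. Qed.

Lemma XP_root (B : {set I}) c : c \in B -> (XP B).[tp c] = 0.
Proof. by move=> cB; rewrite XP_eval (bigD1 c) //= subrr mul0r. Qed.

Lemma exists_pos : exists2 a0, a0 \in T & 0 < lam a0.
Proof.
case: (pselect (exists2 a0, a0 \in T & 0 < lam a0)) => // H.
have : \sum_(i in T) lam i <= 0.
  apply: sumr_le0 => i iT; rewrite leNgt; apply/negP => h; apply: H; by exists i.
by rewrite lam_sum ler10.
Qed.

Lemma single (g : {poly R}) (a : I) : a \in T -> (size g <= d)%N ->
  (forall i, i \in T -> i != a -> g.[tp i] = 0) -> lam a * (wt a * g.[tp a]) = 0.
Proof.
move=> aT sg H; have := H0 sg; rewrite (bigD1 a) //= big1 ?addr0 //.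
by move=> i /andP[iT ia]; rewrite H // !mulr0.
Qed.

Definition Pp (a : I) := \prod_(c in T :\ a) (tp a - tp c).

Lemma pairrel (a b : I) : a \in T -> b \in T -> a != b ->
  lam a * (wt a * Pp a) = lam b * (wt b * Pp b).
Proof.
move=> aT bT ab.
set B := T :\ a :\ b.
have cB : #|B| = d.-1.
  have e1 := cardsD1 a T; have e2 := cardsD1 b (T :\ a).
  rewrite aT cardT in e1; rewrite in_setD1 eq_sym ab bT /= -/B in e2. lia.
have sz : (size (XP B) <= d)%N by rewrite size_XP cB; lia.
have := H0 sz; rewrite (bigD1 a) //= (bigD1 b) /=; last by rewrite bT eq_sym ab.
rewrite big1; last first.
  by move=> i /andP[/andP[iT ia] ib]; rewrite XP_root ?mulr0 // !in_setD1 ib ia iT.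
rewrite addr0 => E.
have Pa : Pp a = (tp a - tp b) * (XP B).[tp a].
  rewrite /Pp (bigD1 b) /=; last by rewrite in_setD1 eq_sym ab bT.
  rewrite XP_eval; congr (_ * _); apply: eq_bigl => c; rewrite /B !in_setD1.
  by case: (c == b); case: (c == a); case: (c \in T).
have Pb : Pp b = (tp b - tp a) * (XP B).[tp b].
  rewrite /Pp (bigD1 a) /=; last by rewrite in_setD1 ab aT.
  rewrite XP_eval; congr (_ * _); apply: eq_bigl => c; rewrite /B !in_setD1.
  by case: (c == b); case: (c == a); case: (c \in T).
rewrite Pa Pb; apply/eqP; rewrite -subr_eq0; apply/eqP.
transitivity ((tp a - tp b) * (lam a * (wt a * (XP B).[tp a]) + lam b * (wt b * (XP B).[tp b]))).
  by ring.
by rewrite E mulr0.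
Qed.

Hypothesis tpinj : {in T &, injective tp}.

Lemma Pp_neq0 (a : I) : a \in T -> Pp a != 0.
Proof.
move=> aT; rewrite /Pp; apply/prodf_neq0 => c; rewrite in_setD1 => /andP[ca cT].
rewrite subr_eq0; apply/eqP => h; move/eqP: ca; apply; exact: (tpinj cT aT (esym h)).
Qed.

Lemma key (a b : I) : a \in T -> b \in T -> Num.sg (wt a * Pp a) = Num.sg (wt b * Pp b).
Proof.
have [a0 a0T la0] := exists_pos.
suff H : forall c, c \in T -> Num.sg (wt c * Pp c) = Num.sg (wt a0 * Pp a0).
  by move=> aT bT; rewrite H // H.
move=> c cT; case: (eqVneq c a0) => [->//|ca].
have E := pairrel cT a0T ca.
have nz : wt a0 * Pp a0 != 0 by rewrite mulf_neq0 ?wt_neq0 ?Pp_neq0.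
have lc : 0 < lam c.
  rewrite lt_def lam_ge0 andbT; apply/eqP => h; move: E; rewrite h mul0r => /esym/eqP.
  by rewrite mulf_eq0 (negbTE nz) orbF => /eqP h2; move: la0; rewrite h2 ltxx.
have := congr1 Num.sg E; by rewrite !sgrM (gtr0_sg lc) (gtr0_sg la0) !mul1r.
Qed.

Lemma two_extras (E : {set I}) (ts : R) :
  E \subset T -> (1 < #|E|)%N -> (forall e, e \in E -> tp e = ts) ->
  (forall e, e \in E -> 0 < wt e) -> (forall c, c \in T :\: E -> tp c < ts) ->
  {in T :\: E &, injective tp} -> False.
Proof.
move=> ET E2 Ets Ewt Plt Pinj.
set P' := T :\: E.
have cP : (#|P'| + #|E| = d.+1)%N.
  by rewrite -cardT -(cardsID E T) (setIidPr ET) addnC.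
have [a0 a0T la0] := exists_pos.
case: (boolP (a0 \in E)) => a0E.
  have sz : (size (XP P') <= d)%N by rewrite size_XP; lia.
  have H := H0 sz.
  have gpos : 0 < (XP P').[ts].
    rewrite XP_eval; apply: prodr_gt0 => c cP'; by rewrite subr_gt0 Plt.
  have tge : forall i, i \in T -> 0 <= lam i * (wt i * (XP P').[tp i]).
    move=> i iT; case: (boolP (i \in E)) => iE.
      by rewrite Ets // mulr_ge0 // mulr_ge0 // ltW // Ewt.
    by rewrite XP_root ?mulr0 // inE iE iT.
  have := (psumr_eq0P tge H a0T); rewrite Ets //.
  apply/eqP; rewrite !mulf_neq0 // gt_eqF //; exact: Ewt.
have a0P : a0 \in P' by rewrite inE a0E a0T.
have sz2 : (size (('X - ts%:P) * XP (P' :\ a0))%R <= d)%N.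
  rewrite size_mul ?polyXsubC_eq0 //; last by rewrite -size_poly_eq0 size_XP.
  rewrite size_XsubC size_XP.
  have := cardsD1 a0 P'; rewrite a0P /=; lia.
have nz : (('X - ts%:P) * XP (P' :\ a0)).[tp a0] != 0.
  rewrite hornerM hornerXsubC XP_eval mulf_neq0 //.
    by rewrite subr_eq0 lt_eqF // Plt.
  apply/prodf_neq0 => c; rewrite in_setD1 => /andP[ca cP2].
  rewrite subr_eq0; apply/eqP => h; move/eqP: ca; apply; exact: (Pinj _ _ cP2 a0P (esym h)).
have Hr : forall i, i \in T -> i != a0 -> (('X - ts%:P) * XP (P' :\ a0)).[tp i] = 0.
  move=> i iT ia; rewrite hornerM; case: (boolP (i \in E)) => iE.
    by rewrite hornerXsubC Ets // subrr mul0r.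
  by rewrite XP_root ?mulr0 // !inE ia iE iT.
move: (single a0T sz2 Hr) => /eqP; rewrite !mulf_eq0 (negbTE nz) (negbTE (wt_neq0 a0T)) gt_eqF //.
Qed.

End Key.

Lemma imsetD1_in (T1 T2 : finType) (f : T1 -> T2) (U : {set T1}) a :
  {in U &, injective f} -> a \in U -> f @: (U :\ a) = f @: U :\ f a.
Proof.
move=> inj aU; apply/setP => x; apply/imsetP/idP.
  move=> [c]; rewrite in_setD1 => /andP[ca cU] ->.
  rewrite in_setD1 imset_f // andbT; apply/eqP => h; move/eqP: ca; apply; exact: inj h.
rewrite in_setD1 => /andP[xa /imsetP[c cU xc]]; exists c => //.
rewrite in_setD1 cU andbT; apply/eqP => ca; move: xa; by rewrite xc ca eqxx.
Qed.

Section Constr.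
Variables (R : realType) (d n m : nat).
Hypothesis d_gt0 : (0 < d)%N.
Hypothesis hm : (2 * m < n)%N.

Definition tp (v : nat) : R := if (v <= 2 * m)%N then ((v.+1) %/ 2)%:R else (m.+1)%:R.
Definition wz (v : nat) : int :=
  if v == 0%N then 0 else if (v <= 2 * m)%N then
    (if odd v then ((v.+1) %/ 2)%:Z else - ((v.+1) %/ 2)%:Z) else v%:Z.
Definition wt (v : nat) : R := (wz v)%:~R.
Definition Pt (i : 'I_n) : 'rV[R]_d := wt i *: \row_(k < d) tp i ^+ k.

Lemma wz_inj (a b : nat) : wz a = wz b -> a = b.
Proof. rewrite /wz; repeat (case: ifP; intro); lia. Qed.

Lemma wt_inj (a b : nat) : wt a = wt b -> a = b.
Proof. by move/intr_inj/wz_inj. Qed.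

Lemma Pt_inj : injective Pt.
Proof.
move=> i j /matrixP /(_ 0 (Ordinal d_gt0)); rewrite !mxE !expr0 !mulr1.
by move/wt_inj/val_inj.
Qed.

Lemma dotp_Pt (g : {poly R}) (i : 'I_n) : (size g <= d)%N ->
  dotp (\row_(k < d) g`_k) (Pt i) = wt i * g.[tp i].
Proof.
move=> sg; rewrite /dotp (horner_coef_wide _ sg) mulr_sumr; apply: eq_bigr => k _.
by rewrite !mxE; ring.
Qed.

Lemma dotp_sum (u : 'rV[R]_d) (lam : 'I_n -> R) :
  dotp u (\sum_(i < n) lam i *: Pt i) = \sum_(i < n) lam i * dotp u (Pt i).
Proof.
rewrite /dotp; under eq_bigr do rewrite summxE mulr_sumr.
rewrite exchange_big; apply: eq_bigr => i _; rewrite mulr_sumr; apply: eq_bigr => k _.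
by rewrite !mxE; ring.
Qed.

Lemma hull_data (T : {set 'I_n}) : in_conv_hull Pt T 0 ->
  exists lam : 'I_n -> R, [/\ forall i, 0 <= lam i, \sum_(i in T) lam i = 1 &
    forall g : {poly R}, (size g <= d)%N -> \sum_(i in T) lam i * (wt i * g.[tp i]) = 0].
Proof.
move=> [lam [l0 lT l1 lS]]; exists lam; split => //.
  rewrite -l1 [RHS](bigID (fun i => i \in T)) /= [X in _ = _ + X]big1 ?addr0 //.
move=> g sg; have := dotp_sum (\row_(k < d) g`_k) lam; rewrite lS.
have -> : dotp (\row_(k < d) g`_k) 0 = 0 by rewrite /dotp big1 // => k _; rewrite !mxE mulr0.
rewrite (bigID (fun i => i \in T)) /= [X in _ + X]big1 ?addr0.
  by move=> /esym H; rewrite -[RHS]H; apply: eq_bigr => i _; rewrite dotp_Pt.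
by move=> i Hi; rewrite lT ?mul0r.
Qed.

Definition o0 : 'I_n := Ordinal (leq_ltn_trans (leq0n _) hm).
Definition idx (v : nat) : 'I_n := insubd o0 v.
Lemma val_idx v : (v < n)%N -> val (idx v) = v.
Proof. by move=> vn; rewrite /idx val_insubd vn. Qed.

Lemma dotpN (u x : 'rV[R]_d) : dotp u (- x) = - dotp u x.
Proof. by rewrite /dotp -sumrN; apply: eq_bigr => k _; rewrite mxE mulrN. Qed.

Lemma Pt_pair (j : nat) : (0 < j <= m)%N -> Pt (idx (2 * j)) = - Pt (idx (2 * j).-1).
Proof.
move=> hj; rewrite /Pt !val_idx; try lia.
have -> : tp (2*j) = tp (2*j).-1 by rewrite /tp; do 2 (case: ifP => ?); congr (_%:R); lia.
rewrite -scaleNr; congr (_ *: _); rewrite /wt -mulrNz; congr (_ *~ _).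
rewrite /wz; repeat (case: ifP; intro); lia.
Qed.

Lemma depth (u : 'rV[R]_d) (c : R) : c <= dotp u 0 ->
  (m.+1 <= #|[set i | in_halfspace u c (Pt i)]|)%N.
Proof.
move=> hc.
have c0 : c <= 0 by move: hc; rewrite /dotp big1 // => k _; rewrite mxE mulr0.
pose f (j : 'I_m.+1) : 'I_n := if nat_of_ord j == 0%N then idx 0 else
  if c <= dotp u (Pt (idx (2 * nat_of_ord j).-1)) then idx (2 * nat_of_ord j).-1 else idx (2 * nat_of_ord j).
have fv : forall j, ((val (f j)).+1 %/ 2 = nat_of_ord j)%N.
  move=> j; have := ltn_ord j; rewrite /f; case: ifP => [/eqP ->|/eqP j0]; first by rewrite val_idx //; lia.
  by case: ifP => _ ?; rewrite val_idx; lia.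
have finj : injective f by move=> i j h; apply: val_inj => /=; rewrite -fv h fv.
have : (#|[set f j | j in [set: 'I_m.+1]]| <= #|[set i | in_halfspace u c (Pt i)]|)%N.
  apply: subset_leq_card; apply/subsetP => x /imsetP[j _ ->]; rewrite inE /in_halfspace.
  rewrite /f; case: ifP => j0.
    suff -> : Pt (idx 0) = 0 by [].
    by rewrite /Pt val_idx ?(leq_ltn_trans (leq0n _) hm) // /wt /wz /= scale0r.
  case: ifP => // hn; have := ltn_ord j; move=> jm.
  rewrite Pt_pair ?dotpN; last by lia.
  move/negbT: hn; rewrite -ltNge => hn; lra.
by rewrite card_imset // cardsT card_ord.
Qed.

Definition pidx (q : 'I_m) (s : bool) : 'I_n := idx (if s then (2 * q).+1 else (2 * q).+2).

Lemma val_pidx q s : val (pidx q s) = if s then (2 * q).+1 else (2 * q).+2.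
Proof. move: (ltn_ord q) => qm; rewrite /pidx val_idx //; case: s; lia. Qed.

Lemma tp_pidx q s : tp (pidx q s) = (q.+1)%:R.
Proof. move: (ltn_ord q) => qm; rewrite /tp val_pidx; case: s; case: ifP => ?; congr (_%:R); lia. Qed.

Lemma wz_pidx q s : wz (pidx q s) = if s then (q.+1)%:Z else - (q.+1)%:Z.
Proof.
move: (ltn_ord q) => qm; rewrite /wz val_pidx; case: s; repeat (case: ifP; intro); try lia.
Qed.

Lemma sg_wt_pidx q s : Num.sg (wt (pidx q s)) = if s then 1 else -1.
Proof.
rewrite /wt wz_pidx; case: s.
  by rewrite gtr0_sg // ltr0z.
by rewrite ltr0_sg // mulrNz oppr_lt0 ltr0z.
Qed.

Lemma pidx_inj q q' s s' : pidx q s = pidx q' s' -> q = q' /\ s = s'.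
Proof.
move/(congr1 val); rewrite !val_pidx => h; split.
  by apply: val_inj => /=; move: h; case: s; case: s'; lia.
by move: h; case: s; case: s'; lia.
Qed.

Lemma pair_ex (x : 'I_n) : (0 < x <= 2 * m)%N -> exists q s, x = pidx q s.
Proof.
move=> hx; have qm : ((x.-1) %/ 2 < m)%N by lia.
exists (Ordinal qm), (odd x); apply: val_inj; rewrite val_pidx /=; case: ifP; lia.
Qed.

Definition k := (n - (2 * m).+1)%N.
Definition ext (e : 'I_k) : 'I_n := idx ((2 * m).+1 + e).
Lemma val_ext e : val (ext e) = ((2 * m).+1 + e)%N.
Proof. have em : (e < n - (2 * m).+1)%N := ltn_ord e. rewrite /ext val_idx //; lia. Qed.
Lemma ext_ex (x : 'I_n) : (2 * m < x)%N -> exists e, x = ext e.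
Proof.
move=> hx; have ek : (x - (2 * m).+1 < k)%N by have := ltn_ord x; rewrite /k; lia.
by exists (Ordinal ek); apply: val_inj; rewrite val_ext /=; lia.
Qed.
Lemma tp_ext (x : 'I_n) : (2 * m < x)%N -> tp x = (m.+1)%:R.
Proof. by rewrite /tp; case: ifP => //; lia. Qed.
Lemma wt_ext_gt0 (x : 'I_n) : (2 * m < x)%N -> 0 < wt x.
Proof. by move=> h; rewrite /wt ltr0z /wz; repeat (case: ifP; intro); lia. Qed.
Lemma wt_neq0 (x : 'I_n) : x != o0 -> wt x != 0.
Proof.
move=> xo; rewrite /wt intr_eq0; apply/eqP; have : nat_of_ord x <> 0%N.
  by move=> h; move/eqP: xo; apply; apply/val_inj; rewrite /= h.
by rewrite /wz; repeat (case: ifP; intro); lia.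
Qed.

Definition QQ (U : {set 'I_n}) : {set 'I_m} :=
  [set q | (pidx q true \in U) || (pidx q false \in U)].
Definition h0 (U : {set 'I_n}) (q : 'I_m) : 'I_n :=
  if pidx q true \in U then pidx q true else pidx q false.
Definition sgnQ (Q : {set 'I_m}) (q : 'I_m) : R :=
  Num.sg (\prod_(p in Q :\ q) ((q : nat)%:R - (p : nat)%:R)).
Definition buildP (Q : {set 'I_m}) (b : bool) : {set 'I_n} :=
  [set pidx q ((-1) ^+ b * sgnQ Q q == 1) | q in Q].

Section PairSet.
Variable U : {set 'I_n}.
Hypothesis Upair : forall y, y \in U -> exists q s, y = pidx q s.
Hypothesis Unop : forall q, ~~ ((pidx q true \in U) && (pidx q false \in U)).

Lemma h0_inj : injective (h0 U).
Proof. by move=> q q'; rewrite /h0; do 2 case: ifP => _; case/pidx_inj. Qed.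

Lemma h0_mem x q s : x \in U -> x = pidx q s -> h0 U q = x.
Proof.
move=> xU xq; subst x; rewrite /h0; move: xU (Unop q); case: s => ->.
  by [].
by rewrite andbT => /negbTE ->.
Qed.

Lemma U_eq : U = h0 U @: QQ U.
Proof.
apply/setP => x; apply/idP/imsetP.
  move=> xU; have [q [s xq]] := Upair xU; exists q; last by rewrite (h0_mem xU xq).
  by rewrite inE; move: xU; rewrite xq; case: (s) => ->; rewrite ?orbT.
move=> [q qQ ->]; move: qQ; rewrite inE /h0 => /orP[] h; first by rewrite h.
by case: ifP.
Qed.

Lemma card_QQ : #|QQ U| = #|U|.
Proof. by rewrite {2}U_eq card_imset //; exact: h0_inj. Qed.

Lemma prod_pairs x q s : x \in U -> x = pidx q s ->
  \prod_(c in U :\ x) (tp x - tp c) = \prod_(p in QQ U :\ q) ((q : nat)%:R - (p : nat)%:R).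
Proof.
move=> xU xq.
have qQ : q \in QQ U by rewrite inE; move: xU; rewrite xq; case: (s) => ->; rewrite ?orbT.
rewrite {1}U_eq -(h0_mem xU xq) -imsetD1_in //; last by move=> ? ? _ _; exact: h0_inj.
rewrite big_imset /=; last by move=> ? ? _ _; exact: h0_inj.
apply: eq_bigr => p _; rewrite /h0; do 2 case: ifP => _; rewrite !tp_pidx -!natr1; ring.
Qed.
Lemma U_build (f : 'I_m -> bool) :
  (forall x q s, x \in U -> x = pidx q s -> s = f q) ->
  U = [set pidx q (f q) | q in QQ U].
Proof.
move=> H; apply/setP => x; apply/idP/imsetP.
  move=> xU; have [q [s xq]] := Upair xU; exists q.
    by rewrite inE; move: xU; rewrite xq; case: (s) => ->; rewrite ?orbT.
  by rewrite xq (H _ _ _ xU xq).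
move=> [q qQ ->].
have hU : h0 U q \in U by rewrite {2}U_eq imset_f.
move: hU; rewrite /h0; case: ifP => hb hU; by rewrite -(H _ _ _ hU (erefl _)).
Qed.
End PairSet.

Lemma sg_pm (x : R) : x != 0 -> Num.sg x = 1 \/ Num.sg x = -1.
Proof.
move=> hx; case: (ltgtP x 0) => [h|h|e]; [right; by rewrite ltr0_sg | left; by rewrite gtr0_sg |].
by rewrite e eqxx in hx.
Qed.

Lemma sgnQ_pm Q q : sgnQ Q q = 1 \/ sgnQ Q q = -1.
Proof.
rewrite /sgnQ; apply: sg_pm.
apply/prodf_neq0 => p; rewrite in_setD1 => /andP[pq _].
rewrite subr_eq0 eqr_nat; apply: contra pq => /eqP h; apply/eqP/val_inj; by rewrite /= h.
Qed.

Lemma m1_neq1 : (-1 : R) != 1.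
Proof. by rewrite lt_eqF // -subr_gt0 opprK; lra. Qed.

Lemma sign_cond (s : bool) (z w : R) : (z = 1 \/ z = -1) ->
  (if s then 1 else -1) * z = w -> s = (w * z == 1).
Proof.
move=> hz <-; case: hz => ->; case: s; rewrite ?mulr1 ?mulrNN ?mul1r ?mulN1r ?opprK ?eqxx //;
  by rewrite (negbTE m1_neq1).
Qed.

Lemma classify (T : {set 'I_n}) : #|T| = d.+1 -> in_conv_hull Pt T 0 -> o0 \notin T ->
  (forall q, ~~ ((pidx q true \in T) && (pidx q false \in T))) ->
  (exists (Q : {set 'I_m}) b, #|Q| = d.+1 /\ T = buildP Q b) \/
  (exists e (Q : {set 'I_m}), #|Q| = d /\ T = ext e |: buildP Q true).
Proof.
move=> cT hull no0 nop.
have [lam [l0 l1 H0]] := hull_data hull.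
set E := [set x in T | (2 * m < x)%N].
have ne0 : forall x, x \in T -> nat_of_ord x <> 0%N.
  move=> x xT h; have xo : x = o0 by apply: val_inj; rewrite /= h.
  by move: no0; rewrite -xo xT.
have wtnz : forall i, i \in T -> wt i != 0.
  move=> i iT; apply: wt_neq0; apply/eqP => h; move: no0; by rewrite -h iT.
have pairP : forall x, x \in T -> ~~ (2 * m < x)%N -> exists q s, x = pidx q s.
  move=> x xT hx; apply: pair_ex; have := ne0 _ xT; lia.
have tpP : forall x, x \in T -> ~~ (2 * m < x)%N -> tp x < (m.+1)%:R.
  move=> x xT hx; have [q [s ->]] := pairP x xT hx; rewrite tp_pidx ltr_nat ltnS.
  exact: ltn_ord.
have tpinjP : forall x y, x \in T -> y \in T -> ~~ (2 * m < x)%N -> ~~ (2 * m < y)%N ->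
    tp x = tp y -> x = y.
  move=> x y xT yT hx hy; have [q [s xq]] := pairP x xT hx; have [q' [s' yq]] := pairP y yT hy.
  subst x y; rewrite !tp_pidx => /eqP; rewrite eqr_nat eqSS => /eqP qq.
  have qq' : q = q' by apply: val_inj.
  subst q'.
  move: (nop q) => /negP nq; move: xT yT hx hy; case: s; case: s'; move=> a b _ _ //; exfalso; apply: nq; apply/andP; split; first [exact: a | exact: b].
case: (ltnP 1 #|E|) => hE.
  exfalso; apply: (@two_extras R d _ lam (fun i => tp i) (fun i => wt i) T H0 l0 l1 cT d_gt0
     wtnz E (m.+1)%:R) => //.
  - by apply/subsetP => x; rewrite inE => /andP[].
  - by move=> e; rewrite inE => /andP[_ he]; rewrite tp_ext.
  - by move=> e; rewrite inE => /andP[_ he]; rewrite wt_ext_gt0.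
  - by move=> c; rewrite !inE negb_and => /andP[/orP[/negbTE->//|hc] cT']; apply: tpP; rewrite // hc.
  - move=> x y; rewrite !inE => /andP[hx xT] /andP[hy yT].
    by apply: tpinjP; rewrite // ?xT ?yT in hx hy.
have tpinj : {in T &, injective (fun i : 'I_n => tp i)}.
  move=> x y xT yT /=.
  case: (boolP (2 * m < x)%N) => hx; case: (boolP (2 * m < y)%N) => hy.
  - move=> _; have xE : x \in E by rewrite inE xT.
    have yE : y \in E by rewrite inE yT.
    by have := card_le1_eqP hE; move=> /(_ x y xE yE).
  - by rewrite tp_ext // => h; have := tpP y yT hy; rewrite -h ltxx.
  - by rewrite (tp_ext hy) => h; have := tpP x xT hx; rewrite h ltxx.
  - exact: tpinjP.
have Hk := @key R d _ lam (fun i => tp i) (fun i => wt i) T H0 l0 l1 cT d_gt0 wtnz tpinj.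
have Ppnz := @Pp_neq0 R _ (fun i : 'I_n => tp i) T tpinj.
have nopU : forall U : {set 'I_n}, U \subset T -> forall q, ~~ ((pidx q true \in U) && (pidx q false \in U)).
  move=> U sU q; apply/negP => /andP[h1 h2]; move/negP: (nop q); apply.
  by rewrite (subsetP sU _ h1) (subsetP sU _ h2).
case: (posnP #|E|) => [E0|Epos].
  left.
  have Upair : forall y, y \in T -> exists q s, y = pidx q s.
    move=> y yT; apply: pairP => //; apply/negP => hy.
    have : y \in E by rewrite inE yT.
    by rewrite (cards0_eq E0) inE.
  have [a0 a0T] : exists a0, a0 \in T by apply/card_gt0P; rewrite cT.
  set sig := Num.sg (wt a0 * Pp (fun i : 'I_n => tp i) T a0).
  have spm : sig = 1 \/ sig = -1 := sg_pm (mulf_neq0 (wtnz a0 a0T) (Ppnz a0 a0T)).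
  exists (QQ T), (sig == -1); split; first by rewrite card_QQ.
  rewrite /buildP; have -> : (-1) ^+ (sig == -1) = sig.
    by case: spm => ->; rewrite ?eqxx // eq_sym (negbTE m1_neq1).
  apply: U_build => // x q s xT xq.
  have := Hk x a0 xT a0T; rewrite -/sig sgrM /Pp /= (prod_pairs Upair (nopU T (subxx T)) xT xq).
  rewrite -/(sgnQ _ _) xq sg_wt_pidx; apply: sign_cond; exact: sgnQ_pm.
right.
have [e Ee] : exists e, E = [set e] by apply/cards1P; rewrite eqn_leq hE Epos.
have : e \in E by rewrite Ee set11.
rewrite inE => /andP[eT he].
set U := T :\ e.
have Upair : forall y, y \in U -> exists q s, y = pidx q s.
  move=> y; rewrite in_setD1 => /andP[ye yT]; apply: pairP => //; apply/negP => hy.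
  have : y \in E by rewrite inE yT.
  by rewrite Ee in_set1 (negbTE ye).
have nU : forall q, ~~ ((pidx q true \in U) && (pidx q false \in U)).
  by apply: nopU; rewrite subD1set.
have [e' ee'] := ext_ex he.
exists e', (QQ U); split.
  rewrite card_QQ //; have := cardsD1 e T; rewrite eT cT -/U; lia.
rewrite -ee' -{1}(setD1K eT) -/U; congr (_ |: _).
rewrite /buildP expr1; apply: U_build => // x q s xU xq.
have xT : x \in T by move: xU; rewrite in_setD1 => /andP[].
have xe : x != e by move: xU; rewrite in_setD1 => /andP[].
have xnx : ~~ (2 * m < x)%N by rewrite xq val_pidx; case: (s); have := ltn_ord q; lia.
have Pe : 0 < Pp (fun i : 'I_n => tp i) T e.
  rewrite /Pp /=; apply: prodr_gt0 => c cU; rewrite subr_gt0 (tp_ext he).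
  have [q' [s' ->]] := Upair c cU; rewrite tp_pidx ltr_nat ltnS; exact: ltn_ord.
have := Hk x e xT eT.
rewrite [in RHS]sgrM (gtr0_sg (wt_ext_gt0 he)) (gtr0_sg Pe) mulr1.
rewrite sgrM /Pp /= (bigD1 e) /=; last by rewrite in_setD1 eq_sym xe eT.
have -> : \prod_(c in T :\ x | c != e) (tp x - tp c) = \prod_(c in U :\ x) (tp x - tp c).
  apply: eq_bigl => c; rewrite !in_setD1; by case: (c == e); case: (c == x); case: (c \in T).
rewrite (prod_pairs Upair nU xU xq) sgrM -/(sgnQ _ _).
rewrite (ltr0_sg (_ : tp x - tp e < 0)); last by rewrite subr_lt0 (tp_ext he) tpP.
rewrite xq sg_wt_pidx => h; rewrite -[_ * sgnQ _ _]mul1r; apply: sign_cond => //.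
by case: (sgnQ_pm (QQ U) q) => ->; rewrite ?mulN1r ?opprK; [right|left].
Qed.

Lemma cardsU_le (T0 : finType) (A B : {set T0}) : (#|A :|: B| <= #|A| + #|B|)%N.
Proof. by rewrite cardsU leq_subr. Qed.

Lemma count_bound :
  (simplex_count Pt 0 <= 'C(n, d) + m * 'C(n, d.-1) + 'C(m, d.+1) * 2 + k * 'C(m, d))%N.
Proof.
rewrite /simplex_count.
set G := [set T : {set 'I_n} | _].
set SA := [set o0 |: U | U in [set U : {set 'I_n} | #|U| == d]].
set SB := [set pidx x.1 true |: (pidx x.1 false |: x.2) |
            x in setX [set: 'I_m] [set U : {set 'I_n} | #|U| == d.-1]].
set SE1 := [set buildP x.1 x.2 | x in setX [set Q : {set 'I_m} | #|Q| == d.+1] [set: bool]].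
set SE2 := [set ext x.1 |: buildP x.2 true | x in setX [set: 'I_k] [set Q : {set 'I_m} | #|Q| == d]].
have sub : G \subset SA :|: SB :|: SE1 :|: SE2.
  apply/subsetP => T; rewrite inE => /andP[/eqP cT /asboolP hull].
  case: (boolP (o0 \in T)) => h0T.
    rewrite !inE; apply/orP; left; apply/orP; left; apply/orP; left.
    apply/imsetP; exists (T :\ o0); last by rewrite setD1K.
    rewrite inE; have := cardsD1 o0 T; rewrite h0T cT /= => h; by move: h; rewrite add1n => -[->].
  case: (pselect (exists q, (pidx q true \in T) && (pidx q false \in T))) => hp.
    have [q /andP[h1 h2]] := hp.
    rewrite !inE; apply/orP; left; apply/orP; left; apply/orP; right.
    have ne : pidx q false != pidx q true by apply/eqP => /pidx_inj [].
    apply/imsetP; exists (q, T :\ pidx q true :\ pidx q false); last first.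
      by rewrite /= setD1K ?setD1K // in_setD1 ne.
    rewrite in_setX inE /= inE.
    have := cardsD1 (pidx q true) T; have := cardsD1 (pidx q false) (T :\ pidx q true).
    rewrite in_setD1 ne h1 h2 cT /= => ha hb; apply/eqP; rewrite !add1n in ha hb; by case: hb => ->; rewrite ha.
  have nop : forall q, ~~ ((pidx q true \in T) && (pidx q false \in T)).
    by move=> q; apply/negP => h; apply: hp; exists q.
  case: (classify cT hull h0T nop) => [[Q [b [cQ ->]]]|[e [Q [cQ ->]]]]; rewrite !inE.
    apply/orP; left; apply/orP; right; apply/imsetP; exists (Q, b) => //.
    by rewrite in_setX !inE cQ eqxx.
  apply/orP; right; apply/imsetP; exists (e, Q) => //.
  by rewrite in_setX !inE cQ eqxx.
apply: leq_trans (subset_leq_card sub) _.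
apply: leq_trans (cardsU_le _ _) _; apply: leq_add; last first.
  apply: leq_trans (leq_imset_card _ _) _.
  by rewrite cardsX cardsT card_ord card_draws card_ord.
apply: leq_trans (cardsU_le _ _) _; apply: leq_add; last first.
  apply: leq_trans (leq_imset_card _ _) _.
  by rewrite cardsX cardsT card_bool card_draws card_ord.
apply: leq_trans (cardsU_le _ _) _; apply: leq_add.
  apply: leq_trans (leq_imset_card _ _) _.
  by rewrite card_draws card_ord.
apply: leq_trans (leq_imset_card _ _) _.
by rewrite cardsX cardsT card_ord card_draws card_ord.
Qed.
End Constr.

Lemma ffact_le n j : (n ^_ j <= n ^ j)%N.
Proof.
elim: j n => [|j IH] n; first by rewrite ffactn0 expn0.
rewrite ffactnS expnS leq_mul2l; apply/orP; right.
apply: leq_trans (IH n.-1) _; case: (posnP j) => [->|jp]; [by rewrite !expn0 | by rewrite leq_exp2r // leq_pred].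
Qed.

Lemma bin_le n j : ('C(n, j) <= n ^ j)%N.
Proof.
apply: leq_trans (ffact_le n j); rewrite -bin_ffact; apply: leq_pmulr; exact: fact_gt0.
Qed.



Lemma mono_f (R : realType) (d : nat) (N x a : R) : 0 <= x -> x <= a -> 2 * a <= N ->
  d.+1%:R * N * x ^+ d - 2 * d%:R * x ^+ d.+1 <= d.+1%:R * N * a ^+ d - 2 * d%:R * a ^+ d.+1.
Proof.
move=> x0 xa aN.
have a0 : 0 <= a by apply: le_trans xa.
set S1 := \sum_(i < d) a ^+ (d - i) * x ^+ i.
have E1 : a ^+ d.+1 - x ^+ d.+1 = (a - x) * (S1 + x ^+ d).
  rewrite subrXX big_ord_recr /= subnn expr0 mul1r; congr (_ * (_ + _)).
have E2 : a * (a ^+ d - x ^+ d) = (a - x) * S1.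
  rewrite subrXX mulrCA mulr_sumr; congr (_ * _); apply: eq_bigr => i _.
  by rewrite mulrA -exprS; congr (_ ^+ _ * _); have := ltn_ord i; lia.
have S1ge : d%:R * x ^+ d <= S1.
  have -> : d%:R * x ^+ d = \sum_(i < d) x ^+ d by rewrite sumr_const card_ord mulr_natl.
  rewrite /S1; apply: ler_sum => i _.
  have := ltn_ord i => id.
  have -> : x ^+ d = x ^+ (d - i) * x ^+ i by rewrite -exprD; congr (_ ^+ _); lia.
  by apply: ler_wpM2r; [exact: exprn_ge0 | apply: lerXn2r].
have S1pos : 0 <= S1 by apply: sumr_ge0 => i _; apply: mulr_ge0; apply: exprn_ge0.
have ax : 0 <= a - x by rewrite subr_ge0.
have dpos : 0 <= d%:R :> R by [].
have key : 2 * d%:R * (a ^+ d.+1 - x ^+ d.+1) <= d.+1%:R * N * (a ^+ d - x ^+ d).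
  have h1 : 0 <= a ^+ d - x ^+ d.
    by rewrite subr_ge0; apply: lerXn2r.
  have h2 : d.+1%:R * (2 * a) * (a ^+ d - x ^+ d) <= d.+1%:R * N * (a ^+ d - x ^+ d).
    by apply: ler_wpM2r => //; apply: ler_wpM2l.
  apply: le_trans h2.
  have -> : d.+1%:R * (2 * a) * (a ^+ d - x ^+ d) = 2 * d.+1%:R * ((a - x) * S1).
    by rewrite -E2; ring.
  rewrite E1.
  have : (a - x) * (d%:R * x ^+ d) <= (a - x) * S1 by apply: ler_wpM2l.
  rewrite -natr1; nra.
lra.
Qed.

Lemma lead_nat d m kk :
  (('C(m, d.+1) * 2 + kk * 'C(m, d)) * (d.+1)`! <= 2 * m ^ d.+1 + d.+1 * kk * m ^ d)%N.
Proof.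
rewrite mulnDl; apply: leq_add.
  by rewrite mulnC mulnA (mulnC _ 'C(_,_)) bin_ffact mulnC leq_mul2l ffact_le orbT.
rewrite factS; have := bin_ffact m d; have := ffact_le m d.
set C := 'C(m, d); set F := d`!; set P := (m ^ d)%N; set Q := m ^_ d => h1 h2.
have : (C * F <= P)%N by rewrite h2.
move=> h3; have := leq_mul (leq_mul (leqnn d.+1) (leqnn kk)) h3; nia.
Qed.

Lemma lead_bound (R : realType) d (alpha : R) n m : (2 * m < n)%N -> 0 <= alpha ->
  alpha <= 2^-1 -> m%:R <= alpha * n%:R ->
  ((('C(m, d.+1) * 2 + k n m * 'C(m, d))%N)%:R : R) <=
  (d.+1%:R * alpha ^+ d - 2 * d%:R * alpha ^+ d.+1) * n%:R ^+ d.+1 / (d.+1)`!%:R.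
Proof.
move=> hm a0 a2 xa.
have F0 : 0 < (d.+1)`!%:R :> R by rewrite ltr0n fact_gt0.
rewrite ler_pdivlMr //.
apply: le_trans (_ : (2 * m ^ d.+1 + d.+1 * k n m * m ^ d)%:R <= _).
  by rewrite -natrM ler_nat lead_nat.
set x : R := m%:R; set N : R := n%:R; set a := alpha * N.
have kx : (k n m)%:R <= N - 2 * x.
  have e : (k n m + (2 * m).+1 = n)%N by rewrite /k; lia.
  have e' : N = (k n m)%:R + 2 * x + 1.
    by rewrite /N -[in LHS]e natrD -addn1 natrD natrM addrA.
  rewrite e'; lra.
have x0 : 0 <= x by [].
rewrite natrD !natrM !natrX -/x.
have h1 : d.+1%:R * (k n m)%:R * x ^+ d <= d.+1%:R * (N - 2 * x) * x ^+ d.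
  apply: ler_wpM2r; first exact: exprn_ge0.
  by apply: ler_wpM2l.
apply: le_trans (_ : 2%:R * x ^+ d.+1 + d.+1%:R * (N - 2 * x) * x ^+ d <= _).
  by rewrite lerD2l.
have -> : 2%:R * x ^+ d.+1 + d.+1%:R * (N - 2 * x) * x ^+ d =
  d.+1%:R * N * x ^+ d - 2 * d%:R * x ^+ d.+1.
  by rewrite exprS -natr1; ring.
have N0 : 0 <= N by [].
have := @mono_f R d N x a x0 xa.
have -> : (d.+1%:R * alpha ^+ d - 2 * d%:R * alpha ^+ d.+1) * N ^+ d.+1 =
  d.+1%:R * N * a ^+ d - 2 * d%:R * a ^+ d.+1.
  by rewrite /a !exprMn !exprS; ring.
apply; rewrite /a; nra.
Qed.

Theorem theorem5 (R : realType) (d : nat) (alpha : R) :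
  (1 <= d)%N -> 0 < alpha -> alpha <= 2^-1 ->
  exists C : R, forall n : nat, (0 < n)%N ->
    exists S : 'I_n -> 'rV[R]_d,
      injective S /\
      at_depth S 0 (alpha * n%:R) /\
      (simplex_count S 0)%:R <=
        (d.+1%:R * alpha ^+ d - 2 * d%:R * alpha ^+ d.+1)
          * n%:R ^+ d.+1 / (d.+1)`!%:R
        + C * n%:R ^+ d.
Proof.
move=> hd ha0 ha2; exists 2 => n n0.
set t := Num.truncn (alpha * n%:R).
set m := minn t ((n.-1) %/ 2).
have hm : (2 * m < n)%N by rewrite /m; lia.
have an0 : 0 <= alpha * n%:R by apply: mulr_ge0; [exact: ltW|].
have F1 : m%:R <= alpha * n%:R.
  apply: le_trans (_ : t%:R <= _); first by rewrite ler_nat /m geq_minl.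
  by rewrite /t truncn_le.
have F2 : alpha * n%:R <= m.+1%:R.
  have [h|h] : (t <= m \/ n <= 2 * m.+1)%N by rewrite /m; lia.
    have h1 : alpha * n%:R < t.+1%:R by rewrite -truncn_le_nat.
    by apply: ltW; apply: lt_le_trans h1 _; rewrite ler_nat.
  move: h; rewrite -(ler_nat R) natrM => hn.
  apply: le_trans (_ : 2^-1 * n%:R <= _); first by apply: ler_wpM2r.
  lra.
exists (Pt R d m); split; first exact: (Pt_inj hd hm).
split.
  move=> u c u0 hc; apply: le_trans F2 _; rewrite ler_nat; exact: (depth hd hm hc).
apply: le_trans (_ : ((('C(n, d) + m * 'C(n, d.-1)) + ('C(m, d.+1) * 2 + k n m * 'C(m, d)))%N)%:R <= _).
  by rewrite ler_nat; apply: leq_trans (count_bound R hd hm) _; rewrite !addnA.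
rewrite natrD addrC; apply: lerD.
  apply: lead_bound => //; exact: ltW.
have : ('C(n, d) + m * 'C(n, d.-1) <= 2 * n ^ d)%N.
  rewrite mul2n -addnn; apply: leq_add; first exact: bin_le.
  have -> : (n ^ d = n * n ^ d.-1)%N by case: (d) hd => // d' _; rewrite expnS.
  apply: leq_mul; first by lia.
  exact: bin_le.
rewrite -(ler_nat R) natrM natrX => h; apply: le_trans h _; by [].
Qed.
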